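(* Let $X$ be a Hilbert space and let $B$ be a bounded self-adjoint operator on $X$ with $\rho(B)=\|B\|=1$ such that $-1$ is not an eigenvalue of $B$. Let $P$ be the orthogonal projection onto $\ker(I-B)$ and let $f\in X$ satisfy $Pf=0$. Then for every $x_0\in X$ the successive approximations $x_{n+1}=Bx_n+f$ satisfy $\|x_n-Bx_n-f\|\to 0$ as $n\to\infty$ (equivalently, the corrections $x_{n+1}-x_n$ tend to zero). No solvability of $x=Bx+f$ is assumed.
   Context: $I$ denotes the identity operator on $X$. *)

(* Defs.v *)
From Stdlib Require Import Reals.
Open Scope R_scope.

Record HilbertSpace := {
  hcar :> Type;
  hzero : hcar;
  hadd : hcar -> hcar -> hcar;
  hopp : hcar -> hcar;
  hscal : R -> hcar -> hcar;
  hinner : hcar -> hcar -> R;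
  haddA : forall x y z, hadd x (hadd y z) = hadd (hadd x y) z;
  haddC : forall x y, hadd x y = hadd y x;
  hadd0 : forall x, hadd x hzero = x;
  haddN : forall x, hadd x (hopp x) = hzero;
  hscalA : forall a b x, hscal a (hscal b x) = hscal (a * b) x;
  hscal1 : forall x, hscal 1 x = x;
  hscalDr : forall a x y, hscal a (hadd x y) = hadd (hscal a x) (hscal a y);
  hscalDl : forall a b x, hscal (a + b) x = hadd (hscal a x) (hscal b x);
  hinner_sym : forall x y, hinner x y = hinner y x;
  hinner_addl : forall x y z, hinner (hadd x y) z = hinner x z + hinner y z;
  hinner_scall : forall a x y, hinner (hscal a x) y = a * hinner x y;
  hinner_pos : forall x, 0 <= hinner x x;
  hinner_def : forall x, hinner x x = 0 -> x = hzero;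
  hcomplete : forall u : nat -> hcar,
    (forall eps, eps > 0 -> exists N : nat, forall m n : nat, (N <= m)%nat -> (N <= n)%nat ->
       sqrt (hinner (hadd (u m) (hopp (u n))) (hadd (u m) (hopp (u n)))) < eps) ->
    exists l : hcar, forall eps, eps > 0 -> exists N : nat, forall n : nat, (N <= n)%nat ->
       sqrt (hinner (hadd (u n) (hopp l)) (hadd (u n) (hopp l))) < eps
}.

Arguments hzero {h}.
Arguments hadd {h}.
Arguments hopp {h}.
Arguments hscal {h}.
Arguments hinner {h}.

Definition hsub {X : HilbertSpace} (x y : X) : X := hadd x (hopp y).
Definition hnorm {X : HilbertSpace} (x : X) : R := sqrt (hinner x x).

Definition is_linear {X : HilbertSpace} (T : X -> X) : Prop :=
  (forall x y, T (hadd x y) = hadd (T x) (T y)) /\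
  (forall a x, T (hscal a x) = hscal a (T x)).

Definition is_bounded_op {X : HilbertSpace} (T : X -> X) : Prop :=
  is_linear T /\ exists M : R, forall x, hnorm (T x) <= M * hnorm x.

Definition self_adjoint {X : HilbertSpace} (T : X -> X) : Prop :=
  forall x y, hinner (T x) y = hinner x (T y).

Definition op_norm_is {X : HilbertSpace} (T : X -> X) (c : R) : Prop :=
  is_lub (fun r => exists x : X, hnorm x <= 1 /\ r = hnorm (T x)) c.

Definition in_spectrum {X : HilbertSpace} (T : X -> X) (lam : R) : Prop :=
  ~ (exists S : X -> X, is_bounded_op S /\
       (forall x, S (hsub (T x) (hscal lam x)) = x) /\
       (forall y, hsub (T (S y)) (hscal lam (S y)) = y)).

Definition spectral_radius_is {X : HilbertSpace} (T : X -> X) (c : R) : Prop :=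
  is_lub (fun r => exists lam, in_spectrum T lam /\ r = Rabs lam) c.

Definition is_eigenvalue {X : HilbertSpace} (T : X -> X) (lam : R) : Prop :=
  exists v : X, v <> hzero /\ T v = hscal lam v.

Definition orth_proj_onto {X : HilbertSpace} (M : X -> Prop) (P : X -> X) : Prop :=
  forall x, M (P x) /\ (forall v, M v -> hinner (hsub x (P x)) v = 0).

(* Main.v *)
Require Import Defs.
From Stdlib Require Import Reals Lra Lia Classical.
Open Scope R_scope.

Lemma inner_zerol (X:HilbertSpace) (v:X) : hinner hzero v = 0.
Proof. pose proof (hinner_addl X hzero hzero v) as H. rewrite hadd0 in H. lra. Qed.

Lemma inner_oppl (X:HilbertSpace) (u v:X) : hinner (hopp u) v = - hinner u v.
Proof. pose proof (hinner_addl X u (hopp u) v) as H. rewrite haddN, inner_zerol in H. lra. Qed.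

Lemma inner_addr (X:HilbertSpace) (u v w:X): hinner u (hadd v w) = hinner u v + hinner u w.
Proof. rewrite (hinner_sym X u (hadd v w)), hinner_addl, (hinner_sym X v u), (hinner_sym X w u). reflexivity. Qed.

Lemma inner_oppr (X:HilbertSpace) (u v:X): hinner u (hopp v) = - hinner u v.
Proof. rewrite (hinner_sym X u (hopp v)), inner_oppl, (hinner_sym X v u). reflexivity. Qed.

Lemma inner_scalr (X:HilbertSpace) a (u v:X): hinner u (hscal a v) = a * hinner u v.
Proof. rewrite (hinner_sym X u (hscal a v)), hinner_scall, (hinner_sym X v u). reflexivity. Qed.

Lemma inner_zeror (X:HilbertSpace) (v:X) : hinner v hzero = 0.
Proof. rewrite hinner_sym; apply inner_zerol. Qed.

Lemma hsub_zero (X:HilbertSpace) (u v : X) : hsub u v = hzero -> u = v.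
Proof.
  unfold hsub; intro H.
  rewrite <- (hadd0 X u), <- (haddN X v), (haddC X v), haddA, H, haddC, hadd0. reflexivity.
Qed.

Lemma hext (X:HilbertSpace) (u v : X) : (forall t, hinner u t = hinner v t) -> u = v.
Proof.
  intro H. apply hsub_zero, hinner_def. unfold hsub.
  rewrite hinner_addl, inner_oppl, H. ring.
Qed.

Global Hint Rewrite hinner_addl inner_oppl hinner_scall inner_zerol inner_addr inner_oppr inner_scalr inner_zeror : hdb.
Ltac hsimp := unfold hsub; autorewrite with hdb.
Ltac hsolve := apply hext; let t := fresh "t" in intro t; hsimp; ring.

Definition sq {X:HilbertSpace} (u:X) := hinner u u.

Lemma sq_pos (X:HilbertSpace) (u:X) : 0 <= sq u.
Proof. apply hinner_pos. Qed.

Lemma sq_sub (X:HilbertSpace) (u v:X) : sq (hsub u v) = sq u - 2 * hinner u v + sq v.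
Proof. unfold sq. hsimp. rewrite (hinner_sym X v u). ring. Qed.

Lemma sq_add_le (X:HilbertSpace) (u v:X) : sq (hadd u v) <= 2 * sq u + 2 * sq v.
Proof.
  pose proof (sq_pos X (hsub u v)) as H. unfold sq, hsub in *. autorewrite with hdb in *.
  rewrite (hinner_sym X v u) in *. lra.
Qed.

Lemma sq_sub_sym (X:HilbertSpace) (u v:X) : sq (hsub u v) = sq (hsub v u).
Proof. rewrite !sq_sub, (hinner_sym X v u). ring. Qed.

Lemma B_opp (X:HilbertSpace) (B:X->X) (hsa : self_adjoint B) u : B (hopp u) = hopp (B u).
Proof. apply hext; intro t. rewrite hsa, !inner_oppl, hsa. reflexivity. Qed.

Lemma B_add (X:HilbertSpace) (B:X->X) (hsa : self_adjoint B) u v : B (hadd u v) = hadd (B u) (B v).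
Proof. apply hext; intro t. rewrite hsa, !hinner_addl, !hsa. reflexivity. Qed.

Lemma B_sub (X:HilbertSpace) (B:X->X) (hsa : self_adjoint B) u v : B (hsub u v) = hsub (B u) (B v).
Proof. unfold hsub. rewrite B_add, B_opp; auto. Qed.

Lemma sqrt_lt_sq q e : 0 <= q -> 0 < e -> q < e * e -> sqrt q < e.
Proof.
  intros Hq He H. destruct (Rlt_or_le (sqrt q) e) as [h|h]; auto.
  pose proof (sqrt_sqrt q Hq). nra.
Qed.

Lemma sq_lt_sqrt q e : 0 <= q -> sqrt q < e -> q < e * e.
Proof. intros Hq H. pose proof (sqrt_sqrt q Hq). pose proof (sqrt_pos q). nra. Qed.

Lemma sq_B (X:HilbertSpace) (B:X->X) (hsa: self_adjoint B) (hn : op_norm_is B 1) (u:X) :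
  sq (B u) <= sq u.
Proof.
  unfold sq. destruct hn as [Hub _].
  destruct (Req_dec (hinner u u) 0) as [H0|H0].
  - apply hinner_def in H0. subst u.
    assert (H : B hzero = hzero). { apply hext; intro t. rewrite hsa, !inner_zerol. reflexivity. }
    rewrite H, inner_zerol. lra.
  - pose proof (hinner_pos X u) as Hp.
    set (s := sqrt (hinner u u)).
    assert (Hs : 0 < s) by (apply sqrt_lt_R0; lra).
    assert (Hss : s * s = hinner u u) by (apply sqrt_sqrt; lra).
    set (t := / s).
    assert (HB: B (hscal t u) = hscal t (B u)).
    { apply hext; intro z. rewrite hsa, !hinner_scall, hsa; reflexivity. }
    assert (H : hnorm (B (hscal t u)) <= 1).
    { apply Hub. exists (hscal t u). split; [|reflexivity].
      unfold hnorm. rewrite hinner_scall, inner_scalr.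
      replace (t * (t * hinner u u)) with 1. rewrite sqrt_1; lra.
      unfold t. rewrite <- Hss. field. lra. }
    unfold hnorm in H. rewrite HB, hinner_scall, inner_scalr in H.
    pose proof (hinner_pos X (B u)) as Hb.
    assert (Ht : t * s = 1) by (unfold t; field; lra).
    assert (Hq : t * (t * hinner (B u) (B u)) <= 1).
    { set (q := t * (t * hinner (B u) (B u))) in *.
      assert (0 <= q) by (unfold q; nra).
      pose proof (sqrt_sqrt q H1). pose proof (sqrt_pos q). nra. }
    replace (hinner (B u) (B u)) with ((s*s) * (t * (t * hinner (B u) (B u)))).
    + rewrite <- Hss. nra.
    + replace ((s*s) * (t * (t * hinner (B u) (B u)))) with ((t*s)*(t*s)* hinner (B u) (B u)) by ring.
      rewrite Ht. ring.
Qed.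

Fixpoint pw (X:HilbertSpace) (B:X->X) (n:nat) (u:X) : X :=
  match n with O => u | S n => B (pw X B n u) end.

Lemma pw_S (X:HilbertSpace) (B:X->X) k v : pw X B k (B v) = B (pw X B k v).
Proof. induction k; simpl; congruence. Qed.

Lemma pw_add (X:HilbertSpace) (B:X->X) k j v : pw X B k (pw X B j v) = pw X B (k + j) v.
Proof. induction k; simpl; congruence. Qed.

Lemma pw_adj (X:HilbertSpace) (B:X->X) (hsa: self_adjoint B) k : forall u v,
  hinner (pw X B k u) v = hinner u (pw X B k v).
Proof.
  induction k; intros u v; simpl; auto.
  rewrite hsa, IHk, pw_S. reflexivity.
Qed.

Lemma pw_inner (X:HilbertSpace) (B:X->X) (hsa: self_adjoint B) k j u v :
  hinner (pw X B k u) (pw X B j v) = hinner u (pw X B (k + j) v).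
Proof. rewrite pw_adj, pw_add; auto. Qed.

Lemma a_anti (X:HilbertSpace) (B:X->X) (hsa: self_adjoint B) (hn : op_norm_is B 1) y k m :
  (k <= m)%nat -> sq (pw X B m y) <= sq (pw X B k y).
Proof.
  induction 1. lra. simpl. pose proof (sq_B X B hsa hn (pw X B m y)). lra.
Qed.

Lemma small_zero q : 0 <= q -> (forall e, e > 0 -> q < e) -> q = 0.
Proof.
  intros Hq H. destruct (Req_dec q 0); auto.
  specialize (H q ltac:(lra)). lra.
Qed.

Lemma core (X:HilbertSpace) (B:X->X) (hsa: self_adjoint B) (hn : op_norm_is B 1)
  (hneg : ~ is_eigenvalue B (-1)) (y:X)
  (hy : forall v, hsub v (B v) = hzero -> hinner y v = 0) :
  forall eps, eps > 0 -> exists N, forall k, (N <= k)%nat -> sq (pw X B k y) < eps.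
Proof.
  set (a := fun k => sq (pw X B k y)).
  destruct (completeness (fun r => exists k, r = - a k)) as [M [HM1 HM2]].
  { exists 0. intros r [k ->]. pose proof (sq_pos X (pw X B k y)). unfold a. lra. }
  { exists (- a 0%nat). exists 0%nat. reflexivity. }
  set (L := - M).
  assert (HL1 : forall k, L <= a k).
  { intro k. specialize (HM1 (- a k) (ex_intro _ k eq_refl)). unfold L. lra. }
  assert (HL2 : forall e, e > 0 -> exists k, a k < L + e).
  { intros e He. destruct (classic (exists k, a k < L + e)) as [h|h]; auto.
    exfalso. assert (M <= M - e); [|lra].
    apply HM2. intros r [k ->].
    destruct (Rlt_or_le (a k) (L + e)) as [h'|h'].
    - exfalso; apply h; eauto.
    - unfold L in h'. lra. }
  assert (HL3 : forall e, e > 0 -> exists N, forall k, (N <= k)%nat -> a k < L + e).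
  { intros e He. destruct (HL2 e He) as [N HN]. exists N. intros k Hk.
    pose proof (a_anti X B hsa hn y N k Hk). unfold a in *. lra. }
  set (z := fun n => pw X B (2 * n) y).
  assert (Hzz : forall n m, hinner (z n) (z m) = a (n + m)%nat).
  { intros n m. unfold z, a, sq. rewrite !pw_inner; auto.
    replace (2 * n + 2 * m)%nat with (n + m + (n + m))%nat by lia. reflexivity. }
  assert (Hcau : forall e, e > 0 -> exists N, forall n m, (N <= n)%nat -> (N <= m)%nat ->
                   sq (hsub (z n) (z m)) < e).
  { intros e He. destruct (HL3 (e/2) ltac:(lra)) as [N HN]. exists N. intros n m Hn Hm.
    rewrite sq_sub, Hzz.
    pose proof (HN (2*n)%nat ltac:(lia)). pose proof (HN (2*m)%nat ltac:(lia)).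
    pose proof (HL1 (n+m)%nat).
    unfold z, a in *. lra. }
  destruct (hcomplete X z) as [w Hw].
  { intros eps He. destruct (Hcau (eps*eps) ltac:(nra)) as [N HN]. exists N.
    intros m n Hm Hn. apply sqrt_lt_sq; [apply hinner_pos | lra | apply HN; auto]. }
  assert (Hw' : forall e, e > 0 -> exists N, forall n, (N <= n)%nat -> sq (hsub (z n) w) < e).
  { intros e He. destruct (Hw (sqrt e) (sqrt_lt_R0 e He)) as [N HN]. exists N.
    intros n Hn. specialize (HN n Hn).
    pose proof (sq_lt_sqrt _ _ (hinner_pos X _) HN). rewrite sqrt_sqrt in H by lra. exact H. }
  assert (HBB : B (B w) = w).
  { apply hsub_zero, hinner_def. apply small_zero. apply hinner_pos.
    intros e He. destruct (Hw' (e/4) ltac:(lra)) as [N HN].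
    assert (Hz : z (S N) = B (B (z N))).
    { unfold z. replace (2 * S N)%nat with (S (S (2 * N))) by lia. reflexivity. }
    assert (Hd : hsub (B (B w)) w = hadd (B (B (hsub w (z N)))) (hsub (z (S N)) w)).
    { rewrite Hz, !(B_sub X B hsa). hsolve. }
    rewrite Hd.
    pose proof (sq_add_le X (B (B (hsub w (z N)))) (hsub (z (S N)) w)).
    pose proof (sq_B X B hsa hn (B (hsub w (z N)))).
    pose proof (sq_B X B hsa hn (hsub w (z N))).
    pose proof (HN N (le_n _)). pose proof (HN (S N) (le_S _ _ (le_n _))).
    rewrite (sq_sub_sym X w (z N)) in *.
    unfold sq in *. lra. }
  assert (HBw : B w = w).
  { set (v := hsub w (B w)).
    destruct (classic (v = hzero)) as [h|h].
    - symmetry. apply hsub_zero. exact h.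
    - exfalso. apply hneg. exists v. split; auto.
      unfold v. rewrite (B_sub X B hsa), HBB. hsolve. }
  assert (Hker : hsub w (B w) = hzero).
  { rewrite HBw. hsolve. }
  assert (Hpw : forall k, pw X B k w = w).
  { induction k; simpl; congruence. }
  assert (Horth : forall n, hinner (z n) w = 0).
  { intro n. unfold z. rewrite pw_adj, Hpw; auto. }
  intros eps He. destruct (Hw' (eps/4) ltac:(lra)) as [N HN]. exists (2*N)%nat.
  intros k Hk. pose proof (a_anti X B hsa hn y _ _ Hk).
  specialize (HN N (le_n _)).
  assert (Hdec : z N = hadd (hsub (z N) w) w) by hsolve.
  pose proof (sq_add_le X (hsub (z N) w) w).
  rewrite <- Hdec in H0.
  pose proof (sq_sub X (z N) w). rewrite Horth in H1.
  pose proof (sq_pos X (z N)).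
  unfold z in *. lra.
Qed.

Theorem theorem1p2 (X : HilbertSpace) (B : X -> X) (P : X -> X) (f x0 : X)
  (x : nat -> X)
  (hB : is_bounded_op B) (hsa : self_adjoint B)
  (hrho : spectral_radius_is B 1) (hnormB : op_norm_is B 1)
  (hneg : ~ is_eigenvalue B (-1))
  (hP : orth_proj_onto (fun v => hsub v (B v) = hzero) P)
  (hPf : P f = hzero)
  (hx0 : x 0%nat = x0)
  (hxS : forall n, x (S n) = hadd (B (x n)) f) :
  Un_cv (fun n => hnorm (hsub (hsub (x n) (B (x n))) f)) 0.
Proof.
  set (e := fun n => hsub (hsub (x n) (B (x n))) f).
  assert (He : forall n, e n = pw X B n (e 0%nat)).
  { induction n; simpl; auto. rewrite <- IHn. unfold e. rewrite hxS, !(B_sub X B hsa), (B_add X B hsa).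
    hsolve. }
  assert (hy : forall v, hsub v (B v) = hzero -> hinner (e 0%nat) v = 0).
  { intros v Hv0. pose proof (hsub_zero _ _ _ Hv0) as Hv.
    destruct (hP f) as [_ Hf]. specialize (Hf v Hv0). rewrite hPf in Hf.
    assert (Hf' : hinner f v = 0).
    { replace (hsub f hzero) with f in Hf by hsolve. exact Hf. }
    unfold e. hsimp. rewrite hsa, <- Hv, Hf'. ring. }
  intros eps Heps. destruct (core X B hsa hnormB hneg (e 0%nat) hy (eps*eps) ltac:(nra)) as [N HN].
  exists N. intros n Hn. unfold R_dist. rewrite Rminus_0_r, Rabs_pos_eq by apply sqrt_pos.
  fold (e n). rewrite He. unfold hnorm. apply sqrt_lt_sq; auto. apply hinner_pos.
  apply HN; auto.
Qed.
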